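(* Let $n\geq 2$. In any presentation of the ring $\mathrm{Mat}_n(\mathbb{Z})$ (as a unital associative ring) by generators and relations, i.e. any isomorphism $\mathrm{Mat}_n(\mathbb{Z})\cong\mathbb{Z}\langle S\rangle/I$ where $\mathbb{Z}\langle S\rangle$ is the free unital associative ring on a finite set $S$ and $I$ is the two-sided ideal generated by a set of relations, the number of relations is at least the number $|S|$ of generators.
   Context: All rings are associative with unit; presentations are in the category of unital associative rings. *)

(* Defs.v *)
From HB Require Import structures.
From mathcomp Require Import all_boot all_order all_algebra.
From mathcomp Require Import finmap.
From mathcomp.multinomials Require Import monalg.
Set Implicit Arguments. Unset Strict Implicit. Unset Printing Implicit Defensive.
Import GRing.Theory.
Local Open Scope ring_scope.

(* The free unital associative ring Z<S> on a set S: the monoid ring over Z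
   of the free monoid {fmonom S} on S (noncommutative words). *)
Definition free_ring (S : choiceType) := {malg int[{fmonom S}]}.

Definition in_ideal_gen (A : pzRingType) (Rel : A -> Prop) (x : A) : Prop :=
  exists (k : nat) (a r b : 'I_k -> A),
    (forall i, Rel (r i)) /\ x = \sum_(i < k) a i * r i * b i.

(* Main.v *)
Require Import Defs.
From HB Require Import structures.
From mathcomp Require Import all_boot all_order all_algebra.
From mathcomp Require Import finmap.
From mathcomp.multinomials Require Import monalg.
Set Implicit Arguments. Unset Strict Implicit. Unset Printing Implicit Defensive.
Import GRing.Theory.
Local Open Scope ring_scope.

Section Deriv.
Variables (n : nat) (S : finType).
Local Notation N := n.+1.
Local Notation F := (free_ring S).
Local Notation R := 'Z_2.
Local Notation V := 'M[R]_N.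
Local Notation M2 := 'M[R]_(N + N).
Variable phi : {rmorphism F -> 'M[int]_N}.

Definition pb (x : F) : V := map_mx (intr : int -> R) (phi x).

Lemma pbM x y : pb (x * y) = pb x * pb y.
Proof. by rewrite /pb rmorphM /= map_mxM. Qed.
Lemma pb1 : pb 1 = 1.
Proof. by rewrite /pb rmorph1 map_mx1. Qed.
Lemma pbD x y : pb (x + y) = pb x + pb y.
Proof. by rewrite /pb rmorphD /= map_mxD. Qed.

Definition B (a b : V) : M2 := block_mx a b 0 a.

Variable t : S -> V.

Definition h (w : {fmonom S}) : M2 := \prod_(s <- fmonom_val w) B (pb << fmu s >>) (t s).

Lemma h_mmorph : mmorphism h.
Proof.
split.
  move=> x y; by rewrite /h fmM big_cat.
by rewrite /h fm1 big_nil.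
Qed.

HB.instance Definition _ := isMultiplicative.Build _ _ h h_mmorph.

Definition psi (p : F) : M2 := mmap (intr : int -> M2) h p.

Lemma psi_mul : multiplicative psi.
Proof.
apply: commr_mmap_is_multiplicative => g m m'.
apply/commr_sym; exact: commr_int.
Qed.

Lemma pb0 : pb 0 = 0.
Proof. by rewrite /pb raddf0 map_mx0. Qed.
Lemma pbz x c : pb (x *~ c) = pb x *~ c.
Proof. by rewrite /pb raddfMz raddfMz. Qed.
Lemma pbB x y : pb (x - y) = pb x - pb y.
Proof. by rewrite /pb raddfB raddfB. Qed.

Lemma B_z a b c : B a b *~ c = B (a *~ c) (b *~ c).
Proof. by rewrite /B -!scaler_int scale_block_mx scaler0. Qed.
Lemma B_add a b a' b' : B a b + B a' b' = B (a + a') (b + b').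
Proof. by rewrite /B add_block_mx addr0. Qed.
Lemma B_mul a b a' b' : B a b * B a' b' = B (a * a') (a * b' + b * a').
Proof. by rewrite /B [_ * _]mulmx_block !mulmx0 !mul0mx !addr0 add0r. Qed.
Lemma B0 : B 0 0 = 0.
Proof. exact: block_mx0. Qed.
Lemma B1 : B 1 0 = 1.
Proof. by rewrite /B [RHS]scalar_mx_block. Qed.

Lemma monom_cons s l : << FMonom (s :: l) >> = << fmu s >> * << FMonom l >> :> F.
Proof.
rewrite malgM_def fgmulUU mulr1; congr (<< _ *g _ >>).
by apply: val_inj; rewrite /= fmM fmuE.
Qed.

Lemma h_B l : exists b, h (FMonom l) = B (pb << FMonom l >>) b.
Proof.
elim: l => [|s l [b IH]].
  exists 0; rewrite /h /= big_nil -B1; congr B.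
  by rewrite -pb1; congr pb; congr (<< _ *g _ >>); apply: val_inj; rewrite /= fm1.
exists (pb << fmu s >> * b + t s * pb << FMonom l >>).
by rewrite /h /= big_cons -/(h (FMonom l)) IH B_mul monom_cons pbM.
Qed.

Lemma psi_B p : exists b, psi p = B (pb p) b.
Proof.
rewrite (monalgE p); set l0 := (X in \sum_(k <- X) _); elim: l0 => [|k l [b IH]].
  by exists 0; rewrite !big_nil /psi raddf0 pb0 B0.
have [b' Hb'] := h_B (fmonom_val k).
exists (b' *~ p@_k + b).
rewrite !big_cons pbD -B_add -IH /psi raddfD /= mmapU.
congr (_ + _).
have -> : << p@_k *g k >> = << k >> *~ p@_k :> F by rewrite -{1}[p@_k]intz raddfMz.
rewrite pbz mulrzl.
move: Hb'; rewrite fmK => ->.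
by rewrite B_z.
Qed.

Definition D p := ursubmx (psi p).

Lemma psiE p : psi p = B (pb p) (D p).
Proof. by rewrite /D; have [b ->] := psi_B p; rewrite /B block_mxKur. Qed.

Lemma D_is_additive : additive D.
Proof.
move=> x y.
have -> : D (x - y) = ursubmx (psi x - psi y) by rewrite /D /psi raddfB.
rewrite (psiE x) (psiE y) /B opp_block_mx add_block_mx !block_mxKur.
by [].
Qed.
HB.instance Definition _ := GRing.isAdditive.Build F V D D_is_additive.

Lemma DM x y : D (x * y) = pb x * D y + D x * pb y.
Proof.
have := (psi_mul).1 x y; rewrite !psiE B_mul => /(congr1 (@ursubmx _ _ _ _ _)).
by rewrite /B !block_mxKur.
Qed.

Lemma Dgen s : D << fmu s >> = t s.
Proof.
rewrite /D /psi mmapU /h fmuE /= big_cons big_nil mulr1 rmorph1 mul1r.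
by rewrite /B block_mxKur.
Qed.
End Deriv.

Lemma deriv0 n (S : finType) (phi : {rmorphism free_ring S -> 'M[int]_n.+1})
  (E : {additive free_ring S -> 'M['Z_2]_n.+1}) :
  (forall x y, E (x * y) = pb phi x * E y + E x * pb phi y) ->
  (forall s, E << fmu s >> = 0) -> forall p, E p = 0.
Proof.
move=> EM Egen.
have E1 : E 1 = 0.
  have := EM 1 1; rewrite mulr1 pb1 mul1r mulr1 => H.
  by apply: (@addIr _ (E 1)); rewrite add0r -H.
have Ew : forall l, E << FMonom l >> = 0.
  elim=> [|s l IH].
    rewrite -E1; congr (E _); congr (<< _ *g _ >>); apply: val_inj; by rewrite /= fm1.
  by rewrite monom_cons EM IH Egen mulr0 mul0r addr0.
move=> p; rewrite (monalgE p) raddf_sum big1 // => k _.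
have -> : << p@_k *g k >> = << k >> *~ p@_k :> free_ring S by rewrite -{1}[p@_k]intz raddfMz.
by rewrite raddfMz -{1}[k]fmK Ew mul0rz.
Qed.

Lemma sum_pick (V : nmodType) N (F : 'I_N -> V) (j : 'I_N) :
  \sum_(l < N) F l *+ (l == j) = F j.
Proof.
rewrite (bigD1 j) //= eqxx mulr1n big1 ?addr0 // => l /negbTE ->.
by rewrite mulr0n.
Qed.

Lemma dd (Rg : pzSemiRingType) N (i j k l : 'I_N.+1) :
  (delta_mx i j : 'M[Rg]_N.+1) * delta_mx k l = delta_mx i l *+ (j == k).
Proof. exact: mul_delta_mx_cond. Qed.

Lemma inner n (S : finType) (phi : {rmorphism free_ring S -> 'M[int]_n.+1})
  (E : {additive free_ring S -> 'M['Z_2]_n.+1}) :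
  (forall x y, E (x * y) = pb phi x * E y + E x * pb phi y) ->
  (forall p, phi p = 0 -> E p = 0) ->
  (forall M, exists p, phi p = M) ->
  exists P, forall x, E x = P * pb phi x - pb phi x * P.
Proof.
move=> EM Eker surj.
have [e He] := @fin_all_exists _ (fun _ => free_ring S)
   (fun ij p => phi p = delta_mx ij.1 ij.2) (fun ij => surj _).
have pbe i j : pb phi (e (i, j)) = delta_mx i j.
  by rewrite /pb He map_delta_mx.
pose d i j := E (e (i, j)).
pose P := \sum_(j < n.+1) d j ord0 * delta_mx ord0 j.
pose Q := \sum_(k < n.+1) delta_mx k ord0 * d ord0 k.
have key : forall x, E x = P * pb phi x + pb phi x * Q.
  move=> x.
  pose y := \sum_(j < n.+1) \sum_(k < n.+1) (e (j, ord0) * e (ord0, k)) *~ phi x j k.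
  have phiy : phi y = phi x.
    rewrite [RHS](matrix_sum_delta (phi x)) /y raddf_sum; apply: eq_bigr => j _.
    rewrite raddf_sum; apply: eq_bigr => k _.
    rewrite raddfMz -scaler_int intz; congr (_ *: _).
    have -> : delta_mx j k = phi (e (j,ord0)) * phi (e (ord0,k)) by rewrite !He /= dd eqxx mulr1n.
    exact: (rmorphM phi (e (j,ord0)) (e (ord0,k))).
  have -> : E x = E y.
    apply/eqP; rewrite -subr_eq0 -raddfB; apply/eqP/Eker.
    by rewrite rmorphB phiy subrr.
  rewrite /y raddf_sum.
  rewrite (matrix_sum_delta (pb phi x)).
  rewrite mulr_sumr mulr_suml -big_split /=; apply: eq_bigr => j _.
  rewrite raddf_sum mulr_sumr mulr_suml -big_split /=; apply: eq_bigr => k _.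
  rewrite raddfMz EM !pbe -/(d _ _) -/(d _ _) -scalerAr -scalerAl.
  rewrite /pb mxE -scaler_int scalerDr addrC; congr (_ *: _ + _ *: _).
    symmetry; rewrite /Q mulr_sumr (eq_bigr (fun l => delta_mx j ord0 * d ord0 l *+ (l == k))).
      by rewrite sum_pick.
    by move=> l _; rewrite mulrA dd mulrnAl eq_sym.
  symmetry; rewrite /P mulr_suml (eq_bigr (fun l => d l ord0 * delta_mx ord0 k *+ (l == j))).
    by rewrite sum_pick.
  by move=> l _; rewrite -mulrA dd mulrnAr.
have E1 : E 1 = 0.
  have := EM 1 1; rewrite mulr1 pb1 mul1r mulr1 => H.
  by apply: (@addIr _ (E 1)); rewrite add0r -H.
have QP : Q = - P.
  have := key 1; rewrite E1 pb1 mulr1 mul1r => /eqP; rewrite eq_sym addrC addr_eq0.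
  by move/eqP.
by exists P => x; rewrite key QP mulrN.
Qed.

Lemma sub2 (W : zmodType) (a b c d : W) : (a - b) - (c - d) = (a - c) - (b - d).
Proof. by rewrite !opprB addrACA [RHS]addrACA [- b + _]addrC. Qed.
Section Dif.
Variables (n : nat) (S : finType) (phi : {rmorphism free_ring S -> 'M[int]_n.+1}).
Variables (D1 D2 : {additive free_ring S -> 'M['Z_2]_n.+1}).
Definition difD p := D1 p - D2 p.
Lemma difD_add : additive difD.
Proof. move=> x y; rewrite /difD (raddfB D1) (raddfB D2); exact: sub2. Qed.
HB.instance Definition _ := GRing.isAdditive.Build _ _ difD difD_add.

Lemma difD_rule :
  (forall x y, D1 (x * y) = pb phi x * D1 y + D1 x * pb phi y) ->
  (forall x y, D2 (x * y) = pb phi x * D2 y + D2 x * pb phi y) ->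
  forall x y, difD (x * y) = pb phi x * difD y + difD x * pb phi y.
Proof.
move=> H1 H2 x y; rewrite /difD H1 H2 mulrBr mulrBl opprD addrACA.
by [].
Qed.

Lemma dif_eq :
  (forall x y, D1 (x * y) = pb phi x * D1 y + D1 x * pb phi y) ->
  (forall x y, D2 (x * y) = pb phi x * D2 y + D2 x * pb phi y) ->
  (forall s, D1 << fmu s >> = D2 << fmu s >>) -> forall p, D1 p = D2 p.
Proof.
move=> H1 H2 Hg p; apply/eqP; rewrite -subr_eq0; apply/eqP.
have := @deriv0 n S phi difD (difD_rule H1 H2).
apply => s; rewrite /difD; apply/eqP; rewrite subr_eq0; apply/eqP; exact: Hg.
Qed.
End Dif.

Lemma Dsub n (S : finType) (phi : {rmorphism free_ring S -> 'M[int]_n.+1})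
  (t u : S -> 'M['Z_2]_n.+1) p :
  D phi (fun s => t s - u s) p = D phi t p - D phi u p.
Proof.
have := @dif_eq n S phi (D phi (fun s => t s - u s)) (difD (D phi t) (D phi u)).
apply.
- exact: DM.
- by apply: difD_rule; exact: DM.
- move=> s; rewrite /difD; transitivity (t s - u s); first exact: Dgen.
  by rewrite -(Dgen phi t s) -(Dgen phi u s).
Qed.

Lemma kerD n (S : finType) (Rel : {fset free_ring S})
    (phi : {rmorphism free_ring S -> 'M[int]_n.+1})
    (phi_ker : forall p : free_ring S,
        phi p = 0 <-> in_ideal_gen (fun r => r \in Rel) p)
    (t : S -> 'M['Z_2]_n.+1) :
  (forall r, r \in Rel -> D phi t r = 0) ->
  forall p, phi p = 0 -> D phi t p = 0.
Proof.
move=> HR p /phi_ker [k [a [r [b [Hr ->]]]]].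
rewrite raddf_sum big1 //= => i _.
have phir : phi (r i) = 0.
  apply/phi_ker; exists 1%N, (fun _ => 1), (fun _ => r i), (fun _ => 1); split => //.
  by rewrite big_ord1 mul1r mulr1.
have pbr : pb phi (r i) = 0 by rewrite /pb phir map_mx0.
rewrite DM DM pbM pbr (HR (r i) (Hr i)).
by rewrite !(mulr0, mul0r, addr0).
Qed.


Lemma Dsub_gen n (S : finType) (phi : {rmorphism free_ring S -> 'M[int]_n.+1})
  (t' t u : S -> 'M['Z_2]_n.+1) :
  (forall s, t' s = t s - u s) -> forall p,
  D phi t' p = D phi t p - D phi u p.
Proof.
move=> Ht p.
have := @dif_eq n S phi (D phi t') (difD (D phi t) (D phi u)).
apply.
- exact: DM.
- by apply: difD_rule; exact: DM.
- move=> s; rewrite /difD; transitivity (t' s); first exact: Dgen.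
  by rewrite Ht -(Dgen phi t s) -(Dgen phi u s).
Qed.

Lemma sc n (a : 'Z_2) (X : 'M['Z_2]_n.+1) : a%:M * X = X * a%:M.
Proof. by symmetry; exact: scalar_mxC. Qed.


Unset Implicit Arguments.
Local Open Scope fset_scope.

Theorem theorem3 (n : nat) (hn : (2 <= n)%N) (S : finType)
    (Rel : {fset free_ring S})
    (phi : {rmorphism free_ring S -> 'M[int]_n})
    (phi_surj : forall M : 'M[int]_n, exists p : free_ring S, phi p = M)
    (phi_ker : forall p : free_ring S,
        phi p = 0 <-> in_ideal_gen (fun r => r \in Rel) p) :
  (#|S| <= #|` Rel|)%N.
Proof.
case: n hn phi phi_surj phi_ker => [//|n] _ phi phi_surj phi_ker.
pose V := 'M['Z_2]_n.+1.
pose Lmap (t : {ffun S -> V}) : {ffun Rel -> V} := [ffun r => D phi t (val r)].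
pose K := [set t : {ffun S -> V} | [forall r : Rel, Lmap t r == 0]].
pose pre (y : {ffun Rel -> V}) : {ffun S -> V} := odflt [ffun=> 0] [pick u | Lmap u == y].
have preP t : Lmap (pre (Lmap t)) = Lmap t.
  rewrite /pre; case: pickP => [u /eqP //|/(_ t)]; by rewrite eqxx.
pose g t := (Lmap t, [ffun s => t s - pre (Lmap t) s]).
have g_inj : injective g.
  move=> t1 t2 eq; have e1 : Lmap t1 = Lmap t2 := congr1 fst eq.
  have e2 := congr1 (fun x => snd x) eq.
  apply/ffunP => s.
  have := congr1 (fun f : {ffun S -> V} => f s) e2.
  rewrite [g t1]/g [g t2]/g e1 !ffunE; exact: addIr.
have gK t : (g t).2 \in K.
  rewrite inE; apply/forallP => r; rewrite /Lmap ffunE.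
  rewrite (@Dsub_gen n S phi _ t (pre (Lmap t))); last by move=> s; rewrite ffunE.
  have := congr1 (fun f : {ffun Rel -> V} => f r) (preP t); rewrite /Lmap !ffunE => ->.
  by rewrite subrr.
have c1 : (#|[set: {ffun S -> V}]| <= #|[set: {ffun Rel -> V}]| * #|K|)%N.
  rewrite -[X in (X <= _)%N](card_imset _ g_inj) -cardsX.
  apply: subset_leq_card; apply/subsetP => _ /imsetP [t _ ->].
  by rewrite inE /= in_setT gK.
pose Wt := {ffun {x : 'I_n.+1 * 'I_n.+1 | x != (ord0, ord0)} -> 'Z_2}.
pose mk (f : Wt) : V := \matrix_(i, j) odflt 0 (omap f (insub (i, j))).
pose C (c : V) : {ffun S -> V} :=
  [ffun s => c * pb phi << fmu s >> - pb phi << fmu s >> * c].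
have c2 : K \subset [set C (mk f) | f : Wt].
  apply/subsetP => t; rewrite inE => /forallP Ht.
  have HR : forall r, r \in Rel -> D phi t r = 0.
    move=> r rR; have := Ht [` rR]; rewrite /Lmap ffunE /= => /eqP.
    by [].
  have [P HP] := inner (DM phi t) (kerD phi_ker HR) phi_surj.
  pose c := P - (P ord0 ord0)%:M.
  apply/imsetP; exists [ffun y => c (val y).1 (val y).2] => //.
  have -> : mk [ffun y => c (val y).1 (val y).2] = c.
    apply/matrixP => i j; rewrite mxE; case: insubP => [y _ vy|].
      by rewrite /= ffunE vy.
    rewrite negbK => /eqP [-> ->].
    by rewrite /c !mxE eqxx mulr1n subrr.
  apply/ffunP => s; rewrite ffunE.
  transitivity (D phi t << fmu s >>); first by symmetry; exact: Dgen.
  apply: (etrans (HP _)).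
  by rewrite /c mulrBl mulrBr sc opprB addrA subrK.
have c3 : (#|K| <= 2 ^ (n.+1 * n.+1).-1)%N.
  apply: (leq_trans (subset_leq_card c2)); apply: (leq_trans (leq_imset_card _ _)).
  rewrite card_ffun card_ord card_sig.
  have -> : #|[pred x : 'I_n.+1 * 'I_n.+1 | x != (ord0, ord0)]| = #|predC1 ((ord0, ord0) : 'I_n.+1 * 'I_n.+1)|.
    by apply: eq_card.
  by rewrite cardC1 card_prod card_ord.
move: c1; rewrite !cardsT !card_ffun -cardfE card_mx card_ord => c1.
have c4 := leq_trans c1 (leq_mul (leqnn _) c3).
move: c4; rewrite -!expnM -expnD leq_exp2l // => c4.
rewrite leqNgt; apply/negP => lt.
move: c4; rewrite leqNgt => /negP; apply.
set a := (n.+1 * n.+1)%N.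
have a0 : (0 < a)%N by rewrite muln_gt0.
rewrite (@leq_trans (a * (#|` Rel|).+1)) //; last by rewrite leq_mul2l lt orbT.
by rewrite mulnS addnC -(prednK a0) addSn ltnS leq_add2r leqnn.
Qed.
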